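(* The Minkowski sum $X+I$ of a closed $\ell_1$-convex set $X\subseteq\mathbb{R}^n$ and an interval $I\subseteq\mathbb{R}^n$ is $\ell_1$-convex.
   Context: A subset $X\subseteq\mathbb{R}^n$ is $\ell_1$-convex if for all $x,x'\in X$, with $D=\sum_i|x_i-x'_i|$, there is $\gamma\colon[0,D]\to X$ with $\gamma(0)=x,\gamma(D)=x'$ and $\sum_i|\gamma_i(t)-\gamma_i(t')|=|t-t'|$ for all $t,t'$. An interval in $\mathbb{R}^n$ is a set $\prod_{i=1}^n I_i$ with each $I_i\subseteq\mathbb{R}$ a (possibly empty, possibly unbounded) interval. *)

(* Defs.v *)
From HB Require Import structures.
From mathcomp Require Import all_boot all_order all_algebra.
From mathcomp Require Import all_classical all_reals all_analysis.
Set Implicit Arguments. Unset Strict Implicit. Unset Printing Implicit Defensive.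
Import Order.TTheory GRing.Theory Num.Theory.
Import numFieldNormedType.Exports.
Local Open Scope classical_set_scope.
Local Open Scope ring_scope.

Definition l1dist {R : realType} {n : nat} (x y : 'rV[R]_n) : R :=
  \sum_(i < n) `|x ord0 i - y ord0 i|.

Definition l1_convex {R : realType} {n : nat} (X : set 'rV[R]_n) : Prop :=
  forall x x' : 'rV[R]_n, X x -> X x' ->
    exists gamma : R -> 'rV[R]_n,
      gamma 0 = x /\ gamma (l1dist x x') = x' /\
      (forall t, 0 <= t <= l1dist x x' -> X (gamma t)) /\
      (forall t t', 0 <= t <= l1dist x x' -> 0 <= t' <= l1dist x x' ->
         l1dist (gamma t) (gamma t') = `|t - t'|).

(* An interval in R^n: product of (possibly empty, possibly unbounded) real
   intervals, each given as a MathComp interval. *)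
Definition box {R : realType} {n : nat} (I : 'I_n -> interval R) : set 'rV[R]_n :=
  [set z | forall i : 'I_n, z ord0 i \in I i].

Definition minkowski_sum {R : realType} {n : nat} (X Y : set 'rV[R]_n) : set 'rV[R]_n :=
  [set z | exists x y, X x /\ Y y /\ z = x + y].

(* Main.v *)
Require Import Defs.
From HB Require Import structures.
From mathcomp Require Import all_boot all_order all_algebra.
From mathcomp Require Import all_classical all_reals all_analysis.
From mathcomp Require Import ring lra.
Import Order.TTheory GRing.Theory Num.Theory.
Import numFieldNormedType.Exports.
Local Open Scope classical_set_scope.
Local Open Scope ring_scope.


Lemma l1dist_ge0 (R : realType) n (x y : 'rV[R]_n) : 0 <= l1dist x y.
Proof. by rewrite /l1dist sumr_ge0. Qed.

Lemma l1distC (R : realType) n (x y : 'rV[R]_n) : l1dist x y = l1dist y x.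
Proof. by rewrite /l1dist; apply: eq_bigr => i _; rewrite distrC. Qed.

Lemma l1dist_xx (R : realType) n (x : 'rV[R]_n) : l1dist x x = 0.
Proof. by rewrite /l1dist big1 // => i _; rewrite subrr normr0. Qed.

Lemma l1dist_eq0 (R : realType) n (x y : 'rV[R]_n) : l1dist x y = 0 -> x = y.
Proof.
move=> H; apply/rowP => j.
have := psumr_eq0P (P := xpredT) (F := fun i => `|x ord0 i - y ord0 i|).
move=> /(_ (fun i _ => normr_ge0 _) H j isT) /eqP.
by rewrite normr_eq0 subr_eq0 => /eqP.
Qed.
Lemma lip_cont (R : realType) (f : R -> R) (K : R) : 0 <= K ->
  (forall x y, `|f x - f y| <= K * `|x - y|) -> continuous f.
Proof.
move=> K0 Hf x; apply/cvgrPdist_lt => e e0; apply/nbhs_ballP.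
have K1 : 0 < K + 1 by lra.
exists (e / (K + 1)); first by rewrite /= divr_gt0.
move=> y; rewrite /ball /= ltr_pdivlMr // => hy.
have := Hf x y; have := normr_ge0 (x - y); nra.
Qed.

Ltac noext t := lazymatch t with
 | context [Num.min _ _] => fail | context [Num.max _ _] => fail
 | context [`|_|] => fail | context [if _ then _ else _] => fail | _ => idtac end.

Ltac spl := repeat match goal with
 | |- context [Num.min ?a ?b] => noext a; noext b; let h := fresh "h" in have [h|h] := leP a b;
      [rewrite ?(min_l h) | rewrite ?(min_r (ltW h))]
 | |- context [Num.max ?a ?b] => noext a; noext b; let h := fresh "h" in have [h|h] := leP a b;
      [rewrite ?(max_r h) | rewrite ?(max_l (ltW h))]
 | |- context [if ?c then _ else _] => noext c; let h := fresh "h" in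
      case: (boolP c) => h; [| rewrite ?leNgt ?ltNge negbK in h]
 | |- context [`|?e|] => noext e; let h := fresh "h" in have [h|h] := leP 0 e;
      [rewrite ?(ger0_norm h) | rewrite ?(ltr0_norm h)]
 end.

Definition cl01 {R : realType} (s : R) : R := Num.min 1 (Num.max 0 s).

Lemma cl01_lip (R : realType) (x y : R) : `|cl01 x - cl01 y| <= `|x - y|.
Proof. rewrite /cl01; spl; lra. Qed.

Lemma reparam (R : realType) (n : nat) (w : R -> 'rV[R]_n) (P : set 'rV[R]_n) (K : R) :
  0 <= K ->
  (forall s, 0 <= s <= 1 -> P (w s)) ->
  (forall a b c, 0 <= a -> a <= b -> b <= c -> c <= 1 ->
     l1dist (w a) (w c) = l1dist (w a) (w b) + l1dist (w b) (w c)) ->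
  (forall s s', 0 <= s <= 1 -> 0 <= s' <= 1 -> l1dist (w s) (w s') <= K * `|s - s'|) ->
  exists W : R -> 'rV[R]_n, W 0 = w 0 /\ W (l1dist (w 0) (w 1)) = w 1 /\
    (forall v, 0 <= v <= l1dist (w 0) (w 1) -> P (W v)) /\
    (forall v v', 0 <= v <= l1dist (w 0) (w 1) -> 0 <= v' <= l1dist (w 0) (w 1) ->
        l1dist (W v) (W v') = `|v - v'|).
Proof.
move=> K0 HP Hadd Hlip.
set L := fun s => l1dist (w 0) (w s).
have HL : forall s s', 0 <= s <= 1 -> 0 <= s' <= 1 -> l1dist (w s) (w s') = `|L s - L s'|.
  have key : forall s s', 0 <= s -> s <= s' -> s' <= 1 -> l1dist (w s) (w s') = `|L s - L s'|.
    move=> s s' h1 h2 h3; rewrite /L (Hadd 0 s s') ?lexx //.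
    by rewrite opprD addrA subrr sub0r normrN ger0_norm // l1dist_ge0.
  move=> s s' /andP[h1 h2] /andP[h3 h4]; have [hs|hs] := leP s s'; first exact: key.
  by rewrite l1distC key ?(ltW hs) // distrC.
have L0 : L 0 = 0 by rewrite /L l1dist_xx.
set D := l1dist (w 0) (w 1).
have D0 : 0 <= D by apply: l1dist_ge0.
have cl01_in : forall s : R, 0 <= cl01 s <= 1.
  by move=> s; rewrite /cl01; apply/andP; split; spl; lra.
have cl01_id : forall s : R, 0 <= s <= 1 -> cl01 s = s.
  by move=> s /andP[? ?]; rewrite /cl01; spl; lra.
have Gc : continuous (fun s => L (cl01 s)).
  apply: (@lip_cont R (fun s => L (cl01 s)) K K0) => x y /=.
  rewrite -HL ?cl01_in //; apply: le_trans (Hlip _ _ (cl01_in x) (cl01_in y)) _.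
  by rewrite ler_wpM2l // cl01_lip.
have ex : forall v, exists c, 0 <= v <= D -> 0 <= c <= 1 /\ L c = v.
  move=> v; have [hv|hv] := boolP (0 <= v <= D); last by exists 0.
  have [||c] := @IVT R (fun s => L (cl01 s)) 0 1 v ler01.
  - exact: continuous_subspaceT.
  - by rewrite /= !cl01_id ?lexx ?ler01 // L0 (min_l D0) (max_r D0).
  move=> /[!in_itv] /= hc; rewrite cl01_id // => Lc.
  by exists c.
have [g Hg] := choice ex.
exists (fun v => w (g v)).
have Hd : forall v v', 0 <= v <= D -> 0 <= v' <= D -> l1dist (w (g v)) (w (g v')) = `|v - v'|.
  move=> v v' hv hv'; have [h1 h2] := Hg v hv; have [h3 h4] := Hg v' hv'.
  by rewrite HL // h2 h4.
split; [|split; [|split]].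
- have [_ h] := Hg 0 (ltac:(by rewrite lexx D0)).
  by apply: l1dist_eq0; rewrite l1distC; exact: h.
- apply: l1dist_eq0; have [h1 h2] := Hg D (ltac:(by rewrite lexx D0)).
  rewrite HL ?lexx ?ler01 // h2; rewrite /L -/D subrr normr0 //.
- by move=> v hv; apply: HP; case: (Hg v hv).
- exact: Hd.
Qed.

Lemma between_or (R : realType) (p q r : R) :
  `|p - r| = `|p - q| + `|q - r| -> (p <= q /\ q <= r) \/ (r <= q /\ q <= p).
Proof. spl; lra. Qed.

Definition clb {R : realType} (b v : R) : R :=
  Num.min (Num.max v (Num.min 0 b)) (Num.max 0 b).

Lemma clb_pos (R : realType) (b v : R) : 0 <= b -> clb b v = Num.min (Num.max v 0) b.
Proof. by move=> hb; rewrite /clb (min_l hb) (max_r hb). Qed.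

Lemma clb_neg (R : realType) (b v : R) : b <= 0 -> clb b v = Num.min (Num.max v b) 0.
Proof. by move=> hb; rewrite /clb (min_r hb) (max_l hb). Qed.

Ltac bcase b := let hb := fresh "hb" in have [hb|hb] := leP 0 b;
  [rewrite ?(@clb_pos _ _ _ hb) | rewrite ?(@clb_neg _ _ _ (ltW hb))].

Definition GG {R : realType} (b u : R) : R := u + clb b (- u).

Definition ff {R : realType} (a b u s : R) : R := GG b u + s * (b - clb b (- a)).

Lemma GG_mono (R : realType) (b u u' : R) : u <= u' -> GG b u <= GG b u'.
Proof. rewrite /GG; bcase b; spl; lra. Qed.

Lemma GG_lip (R : realType) (b u u' : R) : `|GG b u - GG b u'| <= `|u - u'|.
Proof. rewrite /GG; bcase b; spl; lra. Qed.

Lemma GG_const1 (R : realType) (a b u : R) : 0 <= u -> u <= a ->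
  b - clb b (- a) < 0 -> GG b u = 0.
Proof. rewrite /GG; bcase b; spl; lra. Qed.

Lemma GG_const2 (R : realType) (a b u : R) : a <= u -> u <= 0 ->
  0 < b - clb b (- a) -> GG b u = 0.
Proof. rewrite /GG; bcase b; spl; lra. Qed.


Lemma betw3 (R : realType) (p1 p2 p3 : R) :
  (p1 <= p2 /\ p2 <= p3) \/ (p3 <= p2 /\ p2 <= p1) ->
  `|p1 - p3| = `|p1 - p2| + `|p2 - p3|.
Proof. spl; lra. Qed.

Lemma core_between (R : realType) (a b u1 u2 u3 s1 s2 s3 : R) :
  0 <= s1 -> s1 <= s2 -> s2 <= s3 -> s3 <= 1 ->
  (0 <= a -> 0 <= u1 /\ u1 <= u2 /\ u2 <= u3 /\ u3 <= a) ->
  (a <= 0 -> a <= u3 /\ u3 <= u2 /\ u2 <= u1 /\ u1 <= 0) ->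
  `|ff a b u1 s1 - ff a b u3 s3| = `|ff a b u1 s1 - ff a b u2 s2| + `|ff a b u2 s2 - ff a b u3 s3|.
Proof.
move=> h1 h2 h3 h4 ha hb; apply: betw3; rewrite /ff.
set r := b - clb b (- a).
have [h|h] := leP 0 a.
  have [q1 [q2 [q3 q4]]] := ha h.
  have g12 := @GG_mono _ b _ _ q2; have g23 := @GG_mono _ b _ _ q3.
  have [hr|hr] := leP 0 r.
    have m12 : s1 * r <= s2 * r by rewrite ler_wpM2r.
    have m23 : s2 * r <= s3 * r by rewrite ler_wpM2r.
    lra.
  have m12 : s2 * r <= s1 * r by rewrite ler_wnM2r // ltW.
  have m23 : s3 * r <= s2 * r by rewrite ler_wnM2r // ltW.
  rewrite !(@GG_const1 _ a b) //; try lra.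
have h' : a <= 0 by lra.
have [q1 [q2 [q3 q4]]] := hb h'.
have g12 := @GG_mono _ b _ _ q2; have g23 := @GG_mono _ b _ _ q3.
have [hr|hr] := leP r 0.
  have m12 : s2 * r <= s1 * r by rewrite ler_wnM2r.
  have m23 : s3 * r <= s2 * r by rewrite ler_wnM2r.
  lra.
have m12 : s1 * r <= s2 * r by rewrite ler_wpM2r // ltW.
have m23 : s2 * r <= s3 * r by rewrite ler_wpM2r // ltW.
rewrite !(@GG_const2 _ a b) //; try lra.
Qed.

Lemma ff_lip (R : realType) (a b u u' s s' : R) :
  `|ff a b u s - ff a b u' s'| <= `|u - u'| + `|b - clb b (- a)| * `|s - s'|.
Proof.
rewrite /ff.
have -> : GG b u + s * (b - clb b (- a)) - (GG b u' + s' * (b - clb b (- a))) =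
  (GG b u - GG b u') + (s - s') * (b - clb b (- a)) by ring.
apply: le_trans (ler_normD _ _) _.
by rewrite normrM mulrC lerD2r GG_lip.
Qed.

Lemma clb_mono (R : realType) (b x y : R) : x <= y -> clb b x <= clb b y.
Proof. bcase b; spl; lra. Qed.

Lemma clb_bpos (R : realType) (b x : R) : 0 <= b -> 0 <= clb b x /\ clb b x <= b.
Proof. move=> hb; rewrite (@clb_pos _ _ _ hb); split; spl; lra. Qed.

Lemma clb_bneg (R : realType) (b x : R) : b <= 0 -> b <= clb b x /\ clb b x <= 0.
Proof. move=> hb; rewrite (@clb_neg _ _ _ hb); split; spl; lra. Qed.

Lemma clb0 (R : realType) (b : R) : clb b 0 = 0.
Proof. bcase b; spl; lra. Qed.

Lemma memb_core (R : realType) (a b u s : R) :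
  0 <= s -> s <= 1 ->
  (0 <= a -> 0 <= u /\ u <= a) -> (a <= 0 -> a <= u /\ u <= 0) ->
  let v := clb b (- u) + s * (b - clb b (- a)) in
  (0 <= v /\ v <= b) \/ (b <= v /\ v <= 0).
Proof.
move=> h1 h2 ha hb v; rewrite /v.
have c0 := @clb0 _ b.
have [hb0|hb0] := leP 0 b.
  have [l1 u1] := @clb_bpos _ b (- u) hb0; have [l2 u2] := @clb_bpos _ b (- a) hb0.
  have hc : clb b (- u) <= clb b (- a).
    have [h|h] := leP 0 a.
      have [q1 q2] := ha h; have : - u <= 0 by lra.
      move=> /(@clb_mono _ b); lra.
    have [q1 q2] := hb (ltW h); apply: clb_mono; lra.
  have r0 : 0 <= b - clb b (- a) by lra.
  have m1 : 0 <= s * (b - clb b (- a)) by rewrite mulr_ge0.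
  have m2 : s * (b - clb b (- a)) <= b - clb b (- a) by rewrite ler_piMl.
  move: m1 m2; generalize (s * (b - clb b (- a))) => m m1 m2.
  left; split; lra.
have hb1 : b <= 0 by lra.
have [l1 u1] := @clb_bneg _ b (- u) hb1; have [l2 u2] := @clb_bneg _ b (- a) hb1.
have hc : clb b (- a) <= clb b (- u).
  have [h|h] := leP 0 a.
    have [q1 q2] := ha h; apply: clb_mono; lra.
  have [q1 q2] := hb (ltW h); have : 0 <= - u by lra.
  move=> /(@clb_mono _ b); lra.
have r0 : b - clb b (- a) <= 0 by lra.
have m1 : s * (b - clb b (- a)) <= 0 by rewrite mulr_ge0_le0.
have m2 : b - clb b (- a) <= s * (b - clb b (- a)).
  by rewrite -[X in X <= _]mul1r ler_wnM2r.
move: m1 m2; generalize (s * (b - clb b (- a))) => m m1 m2.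
right; split; lra.
Qed.

Lemma in_itv_between (R : realType) (i : interval R) (y b v : R) :
  y \in i -> y + b \in i -> (0 <= v /\ v <= b) \/ (b <= v /\ v <= 0) -> y + v \in i.
Proof.
move=> hy hyb hv.
have II := @interval_is_interval R i.
case: hv => [[h1 h2]|[h1 h2]].
  by apply: (II y (y + b)) => //; apply/andP; split; lra.
by apply: (II (y + b) y) => //; apply/andP; split; lra.
Qed.



Lemma geod_coord (R : realType) (n : nat) (D : R) (g : R -> 'rV[R]_n) :
  (forall t t', 0 <= t <= D -> 0 <= t' <= D -> l1dist (g t) (g t') = `|t - t'|) ->
  forall t1 t2 t3, 0 <= t1 -> t1 <= t2 -> t2 <= t3 -> t3 <= D ->
  forall j, `|g t1 0 j - g t3 0 j| = `|g t1 0 j - g t2 0 j| + `|g t2 0 j - g t3 0 j|.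
Proof.
move=> Hg t1 t2 t3 h1 h2 h3 h4 j.
have i1 : 0 <= t1 <= D by apply/andP; split; lra.
have i2 : 0 <= t2 <= D by apply/andP; split; lra.
have i3 : 0 <= t3 <= D by apply/andP; split; lra.
set F : 'I_n -> R := fun i => `|g t1 0 i - g t2 0 i| + `|g t2 0 i - g t3 0 i| - `|g t1 0 i - g t3 0 i|.
have F0 : forall i, xpredT i -> 0 <= F i.
  move=> i _; rewrite /F subr_ge0.
  have -> : g t1 0 i - g t3 0 i = (g t1 0 i - g t2 0 i) + (g t2 0 i - g t3 0 i) by ring.
  exact: ler_normD.
have S0 : \sum_(i < n) F i = 0.
  rewrite /F sumrB big_split /=.
  have := Hg _ _ i1 i2; have := Hg _ _ i2 i3; have := Hg _ _ i1 i3.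
  rewrite /l1dist => -> -> ->.
  spl; lra.
have := @psumr_eq0P _ _ xpredT F F0 S0 j isT; rewrite /F; lra.
Qed.

Arguments geod_coord {R n D g}.
Arguments between_or {R p q r}.

Lemma u_mono (R : realType) (n : nat) (x x' : 'rV[R]_n) (g : R -> 'rV[R]_n) :
  g 0 = x -> g (l1dist x x') = x' ->
  (forall t t', 0 <= t <= l1dist x x' -> 0 <= t' <= l1dist x x' ->
     l1dist (g t) (g t') = `|t - t'|) ->
  forall t1 t2 t3, 0 <= t1 -> t1 <= t2 -> t2 <= t3 -> t3 <= l1dist x x' ->
  forall j, let a := x' 0 j - x 0 j in
   let u1 := g t1 0 j - x 0 j in let u2 := g t2 0 j - x 0 j in let u3 := g t3 0 j - x 0 j in
  (0 <= a -> 0 <= u1 /\ u1 <= u2 /\ u2 <= u3 /\ u3 <= a) /\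
  (a <= 0 -> a <= u3 /\ u3 <= u2 /\ u2 <= u1 /\ u1 <= 0).
Proof.
move=> g0 gD Hg t1 t2 t3 h1 h2 h3 h4 j a u1 u2 u3.
have D0 : 0 <= l1dist x x' by apply: l1dist_ge0.
have e1 := between_or (geod_coord Hg 0 t1 t2 (lexx 0) h1 h2 (le_trans h3 h4) j).
have e2 := between_or (geod_coord Hg 0 t2 t3 (lexx 0) (le_trans h1 h2) h3 h4 j).
have e3 := between_or (geod_coord Hg 0 t3 (l1dist x x') (lexx 0) (le_trans h1 (le_trans h2 h3)) h4 (lexx _) j).
rewrite g0 in e1 e2 e3; rewrite gD in e3.
rewrite /a /u1 /u2 /u3.
split=> ha; lra.
Qed.

Arguments u_mono {R n x x' g}.
Arguments l1dist_ge0 {R n}.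
Arguments memb_core {R a b u s}.
Arguments core_between {R a b u1 u2 u3 s1 s2 s3}.
Arguments in_itv_between {R i y b v}.
Arguments ff_lip {R}.

Theorem proposition2p3 (R : realType) (n : nat) (X : set 'rV[R]_n)
    (I : 'I_n -> interval R) :
  closed X -> l1_convex X -> l1_convex (minkowski_sum X (box I)).
Proof.
move=> _ HX z z' [x [y [Xx [Iy ->]]]] [x' [y' [Xx' [Iy' ->]]]].
have [g [g0 [gD [gX gd]]]] := HX x x' Xx Xx'.
have D0 : 0 <= l1dist x x' := l1dist_ge0 x x'.
set D1 := l1dist x x' in g0 gD gX gd D0 *.
pose a j := x' 0 j - x 0 j.
pose b j := y' 0 j - y 0 j.
pose w := fun s : R =>
  (\row_j (x 0 j + y 0 j + ff (a j) (b j) (g (s * D1) 0 j - x 0 j) s) : 'rV[R]_n).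
have e : forall c p q : R, (c + p) - (c + q) = p - q by move=> *; ring.
have w0 : w 0 = x + y.
  apply/rowP => j; rewrite !mxE mul0r g0 subrr /ff /GG oppr0 clb0 !mul0r !addr0.
  by [].
have w1 : w 1 = x' + y'.
  apply/rowP => j; rewrite !mxE mul1r gD /ff /GG mul1r /a /b; ring.
have um : forall s1 s2 s3, 0 <= s1 -> s1 <= s2 -> s2 <= s3 -> s3 <= 1 -> forall j,
   let u1 := g (s1 * D1) 0 j - x 0 j in let u2 := g (s2 * D1) 0 j - x 0 j in
   let u3 := g (s3 * D1) 0 j - x 0 j in
  (0 <= a j -> 0 <= u1 /\ u1 <= u2 /\ u2 <= u3 /\ u3 <= a j) /\
  (a j <= 0 -> a j <= u3 /\ u3 <= u2 /\ u2 <= u1 /\ u1 <= 0).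
  move=> s1 s2 s3 h1 h2 h3 h4 j.
  apply: (u_mono g0 gD gd (s1 * D1) (s2 * D1) (s3 * D1)).
  - by rewrite mulr_ge0.
  - by rewrite ler_wpM2r.
  - by rewrite ler_wpM2r.
  - by rewrite ler_piMl.
have HP : forall s, 0 <= s <= 1 -> minkowski_sum X (box I) (w s).
  move=> s /andP[s0 s1].
  exists (g (s * D1)).
  exists (\row_j (y 0 j + (clb (b j) (- (g (s * D1) 0 j - x 0 j)) + s * (b j - clb (b j) (- a j))))).
  split; first by apply: gX; rewrite mulr_ge0 // ler_piMl.
  split.
    move=> j; rewrite mxE.
    have [A B] := um s s s s0 (lexx s) (lexx s) s1 j.
    apply: (in_itv_between (b := b j)); first exact: Iy.
      by have -> : y 0 j + b j = y' 0 j by rewrite /b; ring.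
    apply: (memb_core s0 s1).
      by move=> /A [? [? [? ?]]]; split.
    by move=> /B [? [? [? ?]]]; split.
  by apply/rowP => j; rewrite !mxE /ff /GG; ring.
have Hadd : forall s1 s2 s3, 0 <= s1 -> s1 <= s2 -> s2 <= s3 -> s3 <= 1 ->
     l1dist (w s1) (w s3) = l1dist (w s1) (w s2) + l1dist (w s2) (w s3).
  move=> s1 s2 s3 h1 h2 h3 h4; rewrite /l1dist -big_split; apply: eq_bigr => j _.
  rewrite !mxE !e.
  have [A B] := um s1 s2 s3 h1 h2 h3 h4 j.
  exact: core_between h1 h2 h3 h4 A B.
have Hlip : forall s s', 0 <= s <= 1 -> 0 <= s' <= 1 -> l1dist (w s) (w s') <=
    (D1 + \sum_(j < n) `|b j - clb (b j) (- a j)|) * `|s - s'|.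
  move=> s s' /andP[s0 s1] /andP[s0' s1'].
  have hj : forall j, `|w s 0 j - w s' 0 j| <=
      `|g (s * D1) 0 j - g (s' * D1) 0 j| + `|b j - clb (b j) (- a j)| * `|s - s'|.
    move=> j; rewrite !mxE e; apply: le_trans (ff_lip _ _ _ _ _ _) _.
    by have -> : g (s * D1) 0 j - x 0 j - (g (s' * D1) 0 j - x 0 j) =
      g (s * D1) 0 j - g (s' * D1) 0 j by ring.
  rewrite /l1dist; apply: le_trans (ler_sum _ (fun j _ => hj j)) _.
  rewrite big_split /= -mulr_suml.
  have := gd (s * D1) (s' * D1); rewrite /l1dist => ->; last first.
    - by rewrite mulr_ge0 // ler_piMl.
    - by rewrite mulr_ge0 // ler_piMl.
  rewrite -mulrBl normrM (ger0_norm D0) mulrDl mulrC.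
  by [].
have Kp : 0 <= D1 + \sum_(j < n) `|b j - clb (b j) (- a j)|.
  by rewrite addr_ge0 // sumr_ge0.
have [W [W0 [WD [WP Wd]]]] := @reparam _ _ w _ _ Kp HP Hadd Hlip.
exists W; rewrite -w0 -w1; split; [exact: W0|split; [exact: WD|split]].
- exact: WP.
- exact: Wd.
Qed.
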